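(* Let $p=p(x,y)$ be a germ at the origin of an analytic function with $p(0,0)\neq 0$, and let $C,D$ be constants different from $0$ and $1$. Let $W_C$ (resp. $W_D$) be the planar 4-web whose foliations are the kernels of $dx$, $dy$, $dy-p\,dx$, $dy-C\,p\,dx$ (resp. $dx$, $dy$, $dy-p\,dx$, $dy-D\,p\,dx$). Then there is a (linear) bijection between the space of abelian relations of $W_C$ and that of $W_D$; in particular $W_C$ and $W_D$ have the same rank. *)

(* Defs.v *)
(* Germs of analytic functions at the origin of K^2 are
   modelled by convergent double power series (the ring K{x,y}):
   a germ f is its coefficient array  f i j = coefficient of x^i y^j. *)
From HB Require Import structures.
From mathcomp Require Import all_boot all_order all_algebra.
Set Implicit Arguments. Unset Strict Implicit. Unset Printing Implicit Defensive.
Import Order.TTheory GRing.Theory Num.Theory.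
Local Open Scope ring_scope.

Definition ps (K : Type) := nat -> nat -> K.

Section PowerSeries.
Variable K : numFieldType.

Definition ps_add (f g : ps K) : ps K := fun i j => f i j + g i j.
Definition ps_scale (c : K) (f : ps K) : ps K := fun i j => c * f i j.
Definition ps_const (c : K) : ps K :=
  fun i j => if (i == 0%N) && (j == 0%N) then c else 0.
Definition ps_mul (f g : ps K) : ps K :=
  fun i j => \sum_(k < i.+1) \sum_(l < j.+1) f k l * g (i - k)%N (j - l)%N.
Definition ps_dx (f : ps K) : ps K := fun i j => (i.+1)%:R * f i.+1 j.
Definition ps_dy (f : ps K) : ps K := fun i j => (j.+1)%:R * f i j.+1.

(* convergence (= positive polyradius, via Cauchy estimates):
   the series defines an analytic germ at the origin *)
Definition convergent (f : ps K) : Prop :=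
  exists r : K, 0 < r /\ exists M : K, forall i j, `|f i j| * r ^+ (i + j) <= M.

(* a germ of 1-form  alpha dx + beta dy  *)
Definition form := (ps K * ps K)%type.

(* a planar 4-web, given by 4 defining 1-forms  W k = (alpha_k, beta_k) *)
Definition web4 := 'I_4 -> form.

(* Abelian relation: a 4-tuple of closed analytic 1-forms eta_k = a_k omega_k
   (each defining (a multiple of) the k-th foliation) with sum eta_k = 0. *)
Definition abelian_relation (W : web4) (a : 'I_4 -> ps K) : Prop :=
  [/\ forall k, convergent (a k),
      (* d(a_k (alpha_k dx + beta_k dy)) = 0 *)
      forall k, ps_dx (ps_mul (a k) (W k).2) = ps_dy (ps_mul (a k) (W k).1),
      forall i j, \sum_(k < 4) ps_mul (a k) (W k).1 i j = 0 &
      forall i j, \sum_(k < 4) ps_mul (a k) (W k).2 i j = 0].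

Definition web_pC (p : ps K) (C : K) : web4 :=
  fun k => match val k with
           | 0 => (ps_const 1, ps_const 0)
           | 1 => (ps_const 0, ps_const 1)
           | 2 => (ps_scale (-1) p, ps_const 1)
           | _ => (ps_scale (- C) p, ps_const 1)
           end.

Definition ps4_linear (Phi : ('I_4 -> ps K) -> ('I_4 -> ps K)) : Prop :=
  forall (c : K) (a b : 'I_4 -> ps K) k i j,
    Phi (fun k => ps_add (ps_scale c (a k)) (b k)) k i j
    = c * Phi a k i j + Phi b k i j.

End PowerSeries.

(* Main.v *)
Require Import Defs.
From mathcomp Require Import all_boot all_order all_algebra ring.
From Stdlib Require Import FunctionalExtensionality.
Import Order.TTheory GRing.Theory Num.Theory.
Local Open Scope ring_scope.

Section S.
Variable K : numFieldType.

Definition lin (x : K) (f : ps K) (y : K) (g : ps K) : ps K :=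
  fun i j => x * f i j + y * g i j.

Lemma mul_const (f : ps K) c i j : ps_mul f (ps_const c) i j = f i j * c.
Proof.
rewrite /ps_mul big_ord_recr /= [X in X + _]big1 ?add0r.
  rewrite big_ord_recr /= [X in X + _]big1 ?add0r; first by rewrite !subnn.
  move=> l _; rewrite /ps_const subnn /= subn_eq0 leqNgt ltn_ord /=; exact: mulr0.
move=> k _; apply: big1 => l _.
by rewrite /ps_const subn_eq0 leqNgt ltn_ord /= mulr0.
Qed.

Lemma mul_scale (f h : ps K) c i j :
  ps_mul f (ps_scale c h) i j = c * ps_mul f h i j.
Proof.
rewrite /ps_mul mulr_sumr; apply: eq_bigr => k _.
rewrite mulr_sumr; apply: eq_bigr => l _; rewrite /ps_scale; by rewrite mulrCA.
Qed.

Lemma mul_lin x f y g (h : ps K) i j :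
  ps_mul (lin x f y g) h i j = x * ps_mul f h i j + y * ps_mul g h i j.
Proof.
rewrite /ps_mul !mulr_sumr -big_split; apply: eq_bigr => k _.
rewrite !mulr_sumr -big_split; apply: eq_bigr => l _; by rewrite /lin mulrDl !mulrA.
Qed.

Lemma conv_lin x f y g :
  convergent f -> convergent g -> convergent (lin x f y g).
Proof.
move=> [r1 [r1p [M1 H1]]] [r2 [r2p [M2 H2]]].
have key : forall r, 0 < r -> r <= r1 -> r <= r2 -> convergent (lin x f y g).
  move=> r rp le1 le2; exists r; split => //; exists (`|x| * M1 + `|y| * M2).
  move=> i j; rewrite /lin.
  have rn1 : r ^+ (i + j) <= r1 ^+ (i + j).
    by apply: lerXn2r => //; rewrite qualifE /= ltW.
  have rn2 : r ^+ (i + j) <= r2 ^+ (i + j).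
    by apply: lerXn2r => //; rewrite qualifE /= ltW.
  have r0 : 0 <= r ^+ (i + j) by rewrite exprn_ge0 // ltW.
  apply: le_trans (ler_wpM2r r0 (ler_normD _ _)) _.
  rewrite mulrDl !normrM -!mulrA; apply: lerD; apply: ler_wpM2l => //.
    apply: le_trans (H1 i j); apply: ler_wpM2l => //.
  apply: le_trans (H2 i j); apply: ler_wpM2l => //.
case: (real_leP (gtr0_real r1p) (gtr0_real r2p)) => h.
  by apply: (key r1).
by apply: (key r2) => //; apply: ltW.
Qed.

Lemma mul_ext (f f' h : ps K) i j : (forall i j, f i j = f' i j) ->
  ps_mul f h i j = ps_mul f' h i j.
Proof.
move=> E; rewrite /ps_mul; apply: eq_bigr => k _; apply: eq_bigr => l _.
by rewrite E.
Qed.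

Definition o0 : 'I_4 := @Ordinal 4 0 isT.
Definition o1 : 'I_4 := @Ordinal 4 1 isT.
Definition o2 : 'I_4 := @Ordinal 4 2 isT.
Definition o3 : 'I_4 := @Ordinal 4 3 isT.

Lemma sum4 (F : 'I_4 -> K) : \sum_(k < 4) F k = F o0 + F o1 + F o2 + F o3.
Proof.
rewrite !big_ord_recr big_ord0 /= -!addrA add0r !addrA.
by congr (F _ + F _ + F _ + F _); apply: val_inj.
Qed.

Definition G (al be ga : K) (a : 'I_4 -> ps K) : 'I_4 -> ps K :=
  fun k => match val k with
           | 0 => lin al (a o0) 0 (a o0)
           | 1 => lin be (a o1) 0 (a o1)
           | 2 => lin ga (a o2) 0 (a o2)
           | _ => lin (- be) (a o1) (- ga) (a o2)
           end.

Lemma G0 al be ga a (H : (0 < 4)%N) : G al be ga a (Ordinal H) = lin al (a o0) 0 (a o0).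
Proof. by []. Qed.
Lemma G1 al be ga a (H : (1 < 4)%N) : G al be ga a (Ordinal H) = lin be (a o1) 0 (a o1).
Proof. by []. Qed.
Lemma G2 al be ga a (H : (2 < 4)%N) : G al be ga a (Ordinal H) = lin ga (a o2) 0 (a o2).
Proof. by []. Qed.
Lemma G3 al be ga a (H : (3 < 4)%N) : G al be ga a (Ordinal H) = lin (-be) (a o1) (-ga) (a o2).
Proof. by []. Qed.

Lemma G_AR (p : ps K) (C D al be ga : K) a :
  be * D = al * C -> ga * (1 - D) = al * (1 - C) ->
  abelian_relation (web_pC p C) a -> abelian_relation (web_pC p D) (G al be ga a).
Proof.
move=> E1 E2 [Hc Hcl Hsx Hsy].
have H0 i j : (j.+1)%:R * a o0 i j.+1 = 0.
  move: (Hcl o0) => /(congr1 (fun F => F i j)).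
  by rewrite /= /ps_dx /ps_dy !mul_const mulr1 !mulr0.
have H1 i j : (i.+1)%:R * a o1 i.+1 j = 0.
  move: (Hcl o1) => /(congr1 (fun F => F i j)).
  by rewrite /= /ps_dx /ps_dy !mul_const mulr1 !mulr0.
have H2 i j : (i.+1)%:R * a o2 i.+1 j = - ((j.+1)%:R * ps_mul (a o2) p i j.+1).
  move: (Hcl o2) => /(congr1 (fun F => F i j)).
  by rewrite /= /ps_dx /ps_dy mul_const mul_scale mulr1 mulN1r mulrN.
have H3 i j : (i.+1)%:R * a o3 i.+1 j = - C * ((j.+1)%:R * ps_mul (a o3) p i j.+1).
  move: (Hcl o3) => /(congr1 (fun F => F i j)).
  by rewrite /= /ps_dx /ps_dy mul_const mul_scale mulr1 mulrCA.
have Sy i j : a o1 i j + a o2 i j + a o3 i j = 0.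
  move: (Hsy i j); rewrite sum4 /= !mul_const !mulr1 mulr0 -!addrA add0r.
  by [].
have Sx i j : a o0 i j - ps_mul (a o2) p i j - C * ps_mul (a o3) p i j = 0.
  move: (Hsx i j); rewrite sum4 /= !mul_const !mul_scale mulr1 mulr0 addr0.
  by rewrite mulN1r mulNr.
have A3 i j : a o3 i j = - a o1 i j - a o2 i j.
  by rewrite -[LHS]subr0 -(Sy i j); ring.
have P3 i j : ps_mul (a o3) p i j = - ps_mul (a o1) p i j - ps_mul (a o2) p i j.
  rewrite (@mul_ext _ (lin (-1) (a o1) (-1) (a o2))) ?mul_lin.
    ring.
  by move=> i' j'; rewrite A3 /lin; ring.
split.
- move=> [[|[|[|[|k]]]] Hk] //=; apply: conv_lin; apply: Hc.
- move=> [[|[|[|[|k]]]] Hk] //=;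
  apply: functional_extensionality => i; apply: functional_extensionality => j;
  rewrite /ps_dx /ps_dy ?G0 ?G1 ?G2 ?G3 ?mul_const ?mul_scale ?mul_lin /lin.
  + by rewrite !mulr0 mulr1 mul0r addr0 mulrCA H0 mulr0.
  + by rewrite !mulr0 mulr1 mul0r addr0 mulrCA H1 mulr0.
  + by rewrite mulr1 !mul0r !addr0 mulrCA H2; ring.
  + have R : (j.+1)%:R * ps_mul (a o2) p i j.+1 =
             C * ((j.+1)%:R * ps_mul (a o1) p i j.+1) +
             C * ((j.+1)%:R * ps_mul (a o2) p i j.+1).
      transitivity (- ((i.+1)%:R * a o1 i.+1 j) - ((i.+1)%:R * a o2 i.+1 j)).
        by rewrite H1 H2; ring.
      transitivity ((i.+1)%:R * a o3 i.+1 j); first by rewrite A3; ring.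
      by rewrite H3 P3; ring.
    rewrite mulr1 mulrDr (mulrCA _ (-be)) (mulrCA _ (-ga)) H1 H2.
    transitivity (ga * (1 - D) * ((j.+1)%:R * ps_mul (a o2) p i j.+1)
                  + D * ga * ((j.+1)%:R * ps_mul (a o2) p i j.+1)).
      by ring.
    rewrite E2 -!mulrA.
    have -> : (1 - C) * ((j.+1)%:R * ps_mul (a o2) p i j.+1) =
              C * ((j.+1)%:R * ps_mul (a o1) p i j.+1).
      by rewrite mulrBl mul1r {1}R; ring.
    rewrite mulrA -E1; ring.
- move=> i j; rewrite sum4 ?G0 ?G1 ?G2 ?G3 ?mul_const ?mul_scale ?mul_lin /lin.
  have A0 : a o0 i j = ps_mul (a o2) p i j + C * ps_mul (a o3) p i j.
    by rewrite -[LHS]subr0 -(Sx i j); ring.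
  transitivity (al * a o0 i j - ga * (1 - D) * ps_mul (a o2) p i j
                + be * D * ps_mul (a o1) p i j); first by ring.
  by rewrite E1 E2 A0 P3; ring.
- move=> i j; rewrite sum4 ?G0 ?G1 ?G2 ?G3 ?mul_const ?mul_scale ?mul_lin /lin.
  ring.
Qed.

Lemma AR_sum {p : ps K} {C a} : abelian_relation (web_pC p C) a ->
  forall i j, a o3 i j = - a o1 i j - a o2 i j.
Proof.
move=> [_ _ _ Hsy] i j.
have Sy : a o1 i j + a o2 i j + a o3 i j = 0.
  move: (Hsy i j); rewrite sum4 /= !mul_const !mulr1 mulr0 -!addrA add0r.
  by [].
by rewrite -[LHS]subr0 -Sy; ring.
Qed.

Lemma G_lin al be ga : ps4_linear (G al be ga).
Proof.
move=> c a b [[|[|[|[|k]]]] Hk] i j //;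
  rewrite ?G0 ?G1 ?G2 ?G3 /lin /ps_add /ps_scale; ring.
Qed.

Lemma G_inv (p : ps K) C al be ga al' be' ga' a :
  al' * al = 1 -> be' * be = 1 -> ga' * ga = 1 ->
  abelian_relation (web_pC p C) a ->
  forall k i j, G al' be' ga' (G al be ga a) k i j = a k i j.
Proof.
move=> e1 e2 e3 Ha [[|[|[|[|k]]]] Hk] i j //;
  rewrite ?G0 ?G1 ?G2 ?G3 /o0 /o1 /o2 /o3 ?G0 ?G1 ?G2 ?G3 /lin.
- have -> : Ordinal Hk = o0 by apply: val_inj.
  transitivity ((al' * al) * a o0 i j); first by ring.
  by rewrite e1 mul1r.
- have -> : Ordinal Hk = o1 by apply: val_inj.
  transitivity ((be' * be) * a o1 i j); first by ring.
  by rewrite e2 mul1r.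
- have -> : Ordinal Hk = o2 by apply: val_inj.
  transitivity ((ga' * ga) * a o2 i j); first by ring.
  by rewrite e3 mul1r.
- have -> : Ordinal Hk = o3 by apply: val_inj.
  rewrite (AR_sum Ha).
  transitivity (- ((be' * be) * a o1 i j) - (ga' * ga) * a o2 i j); first by ring.
  by rewrite e2 e3 !mul1r.
Qed.

End S.

Theorem mainTheorem2 (K : numFieldType) (p : ps K) (C D : K) :
  convergent p -> p 0%N 0%N != 0 ->
  C != 0 -> C != 1 -> D != 0 -> D != 1 ->
  exists Phi Psi : ('I_4 -> ps K) -> ('I_4 -> ps K),
    ps4_linear Phi /\ ps4_linear Psi /\
        (forall a, abelian_relation (web_pC p C) a ->
                  abelian_relation (web_pC p D) (Phi a)) /\
        (forall b, abelian_relation (web_pC p D) b ->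
                  abelian_relation (web_pC p C) (Psi b)) /\
        (forall a, abelian_relation (web_pC p C) a ->
                  forall k i j, Psi (Phi a) k i j = a k i j) /\
        (forall b, abelian_relation (web_pC p D) b ->
                  forall k i j, Phi (Psi b) k i j = b k i j).
Proof.
move=> _ _ C0 C1 D0 D1.
have C1' : 1 - C != 0 by rewrite subr_eq0 eq_sym.
have D1' : 1 - D != 0 by rewrite subr_eq0 eq_sym.
set g := D * (1 - C) / (1 - D).
have g0 : g != 0 by rewrite /g !mulf_neq0 // invr_eq0.
exists (@G K D C g), (@G K D^-1 C^-1 g^-1).
split; first exact: G_lin.
split; first exact: G_lin.
split.
  move=> a; apply: G_AR; first by ring.
  by rewrite /g; field.
split.
  move=> b; apply: G_AR; first by rewrite !mulVf.
  by rewrite /g; field; rewrite D0 D1' C1'.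
split.
  move=> a Ha; eapply G_inv; last exact: Ha; by rewrite mulVf.
move=> b Hb; eapply G_inv; last exact: Hb; by rewrite mulfV ?invr_eq0.
Qed.
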